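(* Let $t,q\ge 0$ and $s_1,\dots,s_t\ge 2$ be integers, and let $G^*=K_1\vee (P_3\cup C_{s_1}\cup\cdots\cup C_{s_t}\cup qK_2)$, where $C_2$ denotes a digon, and let $n$ be the number of vertices of $G^*$. Then the least $Q$-eigenvalue satisfies $\sigma_n(G^* )<1$.
   Context: Multigraphs without loops are allowed: degree = number of incident edges; the $(u,v)$ entry of the adjacency matrix $A$ is the number of edges between $u$ and $v$; $C_2$ is the digon (two vertices joined by two parallel edges). $Q=A+D$ with $D$ the diagonal degree matrix, with eigenvalues $\sigma_1\ge\cdots\ge\sigma_n$. $P_3$ is the path on $3$ vertices; $K_1\vee H$ adds one vertex adjacent to all vertices of $H$; $\cup$ is disjoint union; $qK_2$ is $q$ disjoint edges. *)

(* Defs.v *)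
From HB Require Import structures.
From mathcomp Require Import all_boot all_order all_algebra.
From mathcomp Require Import reals.
Set Implicit Arguments. Unset Strict Implicit. Unset Printing Implicit Defensive.
Import Order.TTheory GRing.Theory Num.Theory.
Local Open Scope ring_scope.

(* A loopless multigraph on vertex set {0,..,n-1} is given by a list of edges
   (pairs of vertex labels); parallel edges are repeated entries. *)

(* For s = 2 this gives two parallel edges (a digon). *)
Fixpoint cycle_edges (o : nat) (ss : seq nat) : seq (nat * nat) :=
  match ss with
  | [::] => [::]
  | s :: ss' => [seq (o + i, o + (i.+1 %% s))%N | i <- iota 0 s] ++ cycle_edges (o + s) ss'
  end.

Definition Gstar_n (s : seq nat) (q : nat) : nat := (4 + sumn s + 2 * q)%N.

(* vertex 0 : the K_1 ; vertices 1,2,3 : P_3 ; then the cycles ; then qK_2 *)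
Definition Gstar_edges (s : seq nat) (q : nat) : seq (nat * nat) :=
  [seq (0%N, v) | v <- iota 1 (Gstar_n s q).-1]
  ++ [:: (1, 2); (2, 3)]%N
  ++ cycle_edges 4 s
  ++ [seq ((4 + sumn s + 2 * j)%N, (4 + sumn s + 2 * j).+1) | j <- iota 0 q].

Definition adjmx (R : ringType) (n : nat) (E : seq (nat * nat)) : 'M[R]_n :=
  \matrix_(i < n, j < n)
    (count (fun e => (e == (i : nat, j : nat)) || (e == (j : nat, i : nat))) E)%:R.

Definition degmx (R : ringType) (n : nat) (E : seq (nat * nat)) : 'M[R]_n :=
  diag_mx (\row_(i < n) \sum_(j < n) adjmx R n E i j).

Definition Qmx (R : ringType) (n : nat) (E : seq (nat * nat)) : 'M[R]_n :=
  adjmx R n E + degmx R n E.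

(* Main.v *)
Require Import Defs.
From HB Require Import structures.
From mathcomp Require Import all_boot all_order all_algebra.
From mathcomp Require Import reals.
From mathcomp Require Import ring lra zify.
Import Order.TTheory GRing.Theory Num.Theory.
Set Implicit Arguments. Unset Strict Implicit.
Local Open Scope ring_scope.

Section S.
Variable R : realType.

Definition F (w : nat -> R) (j : nat) (e : nat * nat) : R :=
  (e.2 == j)%:R * (w e.1 + w j) + (e.1 == j)%:R * (w e.2 + w j).

Lemma sum_ind n (w : nat -> R) a : (a < n)%N ->
  \sum_(i < n) w i * (a == i)%:R = w a.
Proof.
move=> ha; rewrite (bigD1 (Ordinal ha)) //= eqxx mulr1 big1 ?addr0 //.
move=> i Hi; have -> : (a == i) = false.
  apply/negP => /eqP Ea; move: Hi; have -> : i = Ordinal ha by apply/val_inj; rewrite /= Ea.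
  by rewrite eqxx.
by rewrite mulr0.
Qed.

Lemma sum_ind1 n a : (a < n)%N ->
  \sum_(i < n) ((a == i)%:R : R) = 1.
Proof.
move=> ha; rewrite -[RHS](sum_ind (fun _ => 1) ha).
by apply: eq_bigr => i _; rewrite mul1r.
Qed.

Lemma mulQ n (E : seq (nat * nat)) (w : nat -> R) (j : 'I_n) :
  all (fun e => [&& (e.1 < n)%N, (e.2 < n)%N & e.1 != e.2]) E ->
  ((\row_(i < n) w i) *m Qmx R n E) 0 j = \sum_(e <- E) F w j e.
Proof.
move=> HE.
rewrite /Qmx mulmxDr /degmx mul_mx_diag !mxE.
under eq_bigr do rewrite !mxE.
under [in X in _ + _ * X]eq_bigr do rewrite !mxE.
elim: E HE => [|[a b] E IH] /=.
  rewrite big_nil.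
  rewrite big1 ?add0r; last by move=> i _; rewrite mulr0.
  by rewrite big1 ?mulr0 // => i _.
case/andP=> /and3P [ha hb hab] HE.
rewrite big_cons -IH //.
have key : forall i j : nat,
   (((a, b) == (i, j)) || ((a, b) == (j, i)) : nat)%:R =
   ((a == i) && (b == j) : nat)%:R + ((b == i) && (a == j) : nat)%:R :> R.
  move=> i k; rewrite !xpair_eqE.
  case Hai: (a == i); case Hbk: (b == k); case Hak: (a == k); case Hbi: (b == i) => //=;
    rewrite ?addr0 ?add0r //.
  by move: hab; rewrite (eqP Hai) (eqP Hbi) eqxx.
under eq_bigr do rewrite natrD key.
under [in X in _ + _ * X]eq_bigr do rewrite natrD key.
rewrite /F /=.
under eq_bigr do rewrite !mulrDr.
rewrite !big_split /=.
have E1 : \sum_(i < n) w i * ((a == i) && (b == j) : nat)%:R = (b == j)%:R * w a.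
  rewrite -(sum_ind w ha) mulr_sumr; apply: eq_bigr => i _.
  by case: (a == i); case: (b == j) => /=; rewrite ?mulr0 ?mul0r ?mulr1 ?mul1r.
have E2 : \sum_(i < n) w i * ((b == i) && (a == j) : nat)%:R = (a == j)%:R * w b.
  rewrite -(sum_ind w hb) mulr_sumr; apply: eq_bigr => i _.
  by case: (b == i); case: (a == j) => /=; rewrite ?mulr0 ?mul0r ?mulr1 ?mul1r.
have E3 : \sum_(i < n) (((a == j) && (b == i) : nat)%:R : R) = (a == j)%:R.
  transitivity (\sum_(i<n) (a == j)%:R * (((b == i) : nat)%:R : R)).
    by apply: eq_bigr => i _; case: (b == i); case: (a == j); rewrite /= ?mulr0 ?mulr1.
  by rewrite -mulr_sumr sum_ind1 // mulr1.
have E4 : \sum_(i < n) (((b == j) && (a == i) : nat)%:R : R) = (b == j)%:R.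
  transitivity (\sum_(i<n) (b == j)%:R * (((a == i) : nat)%:R : R)).
    by apply: eq_bigr => i _; case: (a == i); case: (b == j); rewrite /= ?mulr0 ?mulr1.
  by rewrite -mulr_sumr sum_ind1 // mulr1.
rewrite E1 E2 E3 E4.
ring.
Qed.


Lemma sum_boolR (T : Type) (r : seq T) (P : pred T) :
  \sum_(i <- r) ((P i : nat)%:R : R) = (count P r)%:R.
Proof. by elim: r => [|x r IH]; rewrite ?big_nil ?big_cons //= IH natrD. Qed.

Lemma sum_constR (T : Type) (r : seq T) (c : R) :
  \sum_(i <- r) c = (size r)%:R * c.
Proof. by elim: r => [|x r IH]; rewrite ?big_nil ?big_cons /= ?mul0r // IH -add1n natrD mulrDl mul1r. Qed.

Lemma cnt1 o s0 j : count (fun i => o + i == j)%N (iota 0 s0) = (o <= j < o + s0)%N.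
Proof.
have -> : (fun i => o + i == j)%N = (pred1 j) \o (addn o) by [].
by rewrite -count_map -iotaDl addn0 count_uniq_mem ?iota_uniq // mem_iota.
Qed.

Lemma cnt2 o s0 j : (0 < s0)%N ->
  count (fun i => o + (i.+1 %% s0) == j)%N (iota 0 s0) = (o <= j < o + s0)%N.
Proof.
case: s0 => // m _.
rewrite -(addn1 m) iotaD count_cat /= add0n addn1 modnn addn0.
rewrite (@eq_in_count _ _ (fun i => o.+1 + i == j)%N); last first.
  move=> i; rewrite mem_iota add0n => /andP [_ hi].
  by rewrite modn_small ?ltnS // addnS addSn.
rewrite cnt1.
case: (ltngtP o j) => H /=; rewrite addn0.
- by rewrite (ltn_eqF H) addn0 addSn addnS.
- by rewrite (gtn_eqF H).
- by rewrite -H eqxx /=; lia.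
Qed.

Lemma cyc_ok o s : all (fun x => 2 <= x)%N s ->
  all (fun e => [&& (o <= e.1)%N, (e.1 < o + sumn s)%N, (o <= e.2)%N,
                  (e.2 < o + sumn s)%N & e.1 != e.2]) (cycle_edges o s).
Proof.
elim: s o => [|s0 ss IH] o //= /andP [h2 hs]; rewrite all_cat; apply/andP; split.
  rewrite all_map; apply/allP => i; rewrite mem_iota add0n => /andP [_ hi] /=.
  have hm : (i.+1 %% s0 < s0)%N by rewrite ltn_pmod //; lia.
  have hne : i != (i.+1 %% s0)%N.
    case: (ltnP i.+1 s0) => h.
      by rewrite modn_small // neq_ltn ltnSn.
    have e : i.+1 = s0 by lia.
    by rewrite e modnn; lia.
  rewrite eqn_add2l hne andbT; apply/and4P; split; lia.
have := IH (o + s0) hs; apply: sub_all => -[a b] /= /and5P [h1 h2' h3 h4 h5].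
apply/and5P; split => //; lia.
Qed.

Lemma ind_w (w : nat -> R) c x j : w x = c ->
  ((x == j : bool) : nat)%:R * (c + w j) = ((x == j : bool) : nat)%:R * (2 * c).
Proof. by move=> hx; case: (eqVneq x j) => [<-|_]; rewrite ?hx /= ?mul0r //; ring. Qed.

Lemma cyc_sum o s (w : nat -> R) c j : all (fun x => 2 <= x)%N s ->
  (forall k, (o <= k < o + sumn s)%N -> w k = c) ->
  \sum_(e <- cycle_edges o s) F w j e = ((o <= j < o + sumn s)%N : nat)%:R * (4 * c).
Proof.
elim: s o => [|s0 ss IH] o /= hs hw.
  by rewrite big_nil addn0 ltnNge andbN mul0r.
case/andP: hs => h2 hs.
rewrite big_cat /= (IH (o + s0)%N hs); last by move=> k hk; apply: hw; lia.
rewrite big_map.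
rewrite (eq_big_seq (fun i => ((((o + i.+1 %% s0)%N == j : bool) : nat)%:R
    + (((o + i)%N == j : bool) : nat)%:R) * (2 * c))); last first.
  move=> i; rewrite mem_iota add0n => /andP [_ hi].
  have hm : (i.+1 %% s0 < s0)%N by rewrite ltn_pmod //; lia.
  have ha : w (o+i)%N = c by apply: hw; lia.
  have hb : w (o + i.+1 %% s0)%N = c by apply: hw; lia.
  by rewrite /F /= ha hb (ind_w j hb) (ind_w j ha); ring.
rewrite -big_distrl big_split /= !sum_boolR cnt1 cnt2; last by lia.
case: (boolP (o <= j < o+s0)%N) => H1; case: (boolP (o+s0 <= j < o+s0+sumn ss)%N) => H2;
  case: (boolP (o <= j < o+(s0+sumn ss))%N) => H3 /=; try ring; lia.
Qed.

Lemma k2_ok m q :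
  all (fun e => [&& (m <= e.1)%N, (e.1 < m + 2 * q)%N, (m <= e.2)%N,
                  (e.2 < m + 2 * q)%N & e.1 != e.2])
    [seq ((m + 2 * k)%N, (m + 2 * k).+1) | k <- iota 0 q].
Proof.
rewrite all_map; apply/allP => k; rewrite mem_iota add0n => /andP [_ hk] /=.
rewrite neq_ltn ltnSn /= andbT; apply/and4P; split; lia.
Qed.

Lemma k2_cnt m q j :
  (count (fun k => (m + 2 * k).+1 == j)%N (iota 0 q)
   + count (fun k => m + 2 * k == j)%N (iota 0 q) = (m <= j < m + 2 * q))%N.
Proof.
elim: q => [|q IH]; first by rewrite /=; lia.
rewrite -(addn1 q) iotaD !count_cat /= !add0n !addn0.
move: IH; case: (boolP ((m + 2 * q).+1 == j)) => /eqP H1;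
  case: (boolP ((m + 2 * q) == j)) => /eqP H2 /=; lia.
Qed.

Lemma k2_sum m q (w : nat -> R) c j :
  (forall k, (m <= k < m + 2 * q)%N -> w k = c) ->
  \sum_(e <- [seq ((m + 2 * k)%N, (m + 2 * k).+1) | k <- iota 0 q]) F w j e
   = ((m <= j < m + 2 * q)%N : nat)%:R * (2 * c).
Proof.
move=> hw; rewrite big_map.
rewrite (eq_big_seq (fun k => (((((m + 2 * k).+1)%N == j : bool) : nat)%:R
    + (((m + 2 * k)%N == j : bool) : nat)%:R) * (2 * c))); last first.
  move=> k; rewrite mem_iota add0n => /andP [_ hk].
  have ha : w (m + 2 * k)%N = c by apply: hw; lia.
  have hb : w (m + 2 * k).+1 = c by apply: hw; lia.
  by rewrite /F /= ha hb (ind_w j hb) (ind_w j ha); ring.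
by rewrite -big_distrl big_split /= !sum_boolR -natrD k2_cnt.
Qed.

Lemma star_sum0 N (w : nat -> R) :
  \sum_(e <- [seq (0%N, v) | v <- iota 1 N]) F w 0 e
   = \sum_(v <- iota 1 N) w v + N%:R * w 0%N.
Proof.
rewrite big_map (eq_big_seq (fun v => w v + w 0%N)); last first.
  move=> v; rewrite mem_iota => /andP [hv _].
  by rewrite /F /= (gtn_eqF hv) mul0r add0r; ring.
by rewrite big_split /= sum_constR size_iota.
Qed.

Lemma star_sumj N (w : nat -> R) (j : nat) : (0 < j <= N)%N ->
  \sum_(e <- [seq (0%N, v) | v <- iota 1 N]) F w j e = w 0%N + w j.
Proof.
move=> /andP [hj hjN].
rewrite big_map (eq_big_seq (fun v => ((v == j : bool) : nat)%:R * (w 0%N + w j))); last first.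
  by move=> v _; rewrite /F /= (ltn_eqF hj) mul0r addr0.
rewrite -big_distrl sum_boolR.
have -> : count (fun v => v == j) (iota 1 N) = 1%N.
  by rewrite (count_uniq_mem j (iota_uniq 1 N)) mem_iota hj /= add1n ltnS hjN.
exact: mul1r.
Qed.
End S.

Unset Implicit Arguments.

Theorem lemma3p5 (R : realType) (t q : nat) (s : seq nat)
  (hs_size : size s = t) (hs : all (fun x => 2 <= x)%N s) :
  exists a : R,
    eigenvalue (Qmx R (Gstar_n s q) (Gstar_edges s q)) a /\ a < 1.
Proof.
set S := sumn s.
have [N eqN] : {N : nat | N = (3 + S + 2 * q)%N} by exists (3 + S + 2 * q)%N.
pose x0 (l : R) := (l - 1) * (l - 4) * (l - 5) * (l - 3).
pose xa (l : R) := (l - 2) * (l - 5) * (l - 3).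
pose xb (l : R) := l * (l - 5) * (l - 3).
pose xc (l : R) := (l - 1) * (l - 4) * (l - 3).
pose xk (l : R) := (l - 1) * (l - 4) * (l - 5).
pose g (l : R) := (l - N%:R) * x0 l - 2 * xa l - xb l - S%:R * xc l - (2 * q)%:R * xk l.
pose P : {poly R} := ('X - N%:R%:P) * (('X - 1) * ('X - 4%:P) * ('X - 5%:P) * ('X - 3%:P))
   - 2%:P * (('X - 2%:P) * ('X - 5%:P) * ('X - 3%:P)) - 'X * ('X - 5%:P) * ('X - 3%:P)
   - S%:R%:P * (('X - 1) * ('X - 4%:P) * ('X - 3%:P))
   - (2 * q)%:R%:P * (('X - 1) * ('X - 4%:P) * ('X - 5%:P)).
have hP : forall l, P.[l] = g l.
  by move=> l; rewrite /P /g /x0 /xa /xb /xc /xk !hornerE.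
have hS : 0 <= (S%:R : R) by [].
have hq : 0 <= (q%:R : R) by [].
have hN : (N%:R : R) = 3 + S%:R + 2 * q%:R by rewrite eqN !natrD; ring.
have h2q : ((2 * q)%:R : R) = 2 * q%:R by rewrite natrM.
have g1 : g 1 = 8 by rewrite /g /x0 /xa /xb /xc /xk; ring.
have g0 : g 0 = - 120 - 48 * S%:R - 80 * q%:R by rewrite /g /x0 /xa /xb /xc /xk hN h2q; ring.
have hP0 : P.[0] <= 0 by rewrite hP g0; lra.
have hP1 : 0 <= P.[1] by rewrite hP g1; lra.
have [x /andP [hx0 hx1] hroot] : exists2 x : R, 0 <= x <= 1 & root P x.
  by apply: poly_ivt => //; rewrite hP0 hP1.
have gx : g x = 0 by rewrite -hP; apply/eqP.
have hx : x < 1.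
  rewrite lt_neqAle hx1 andbT; apply/eqP => e1; move: gx; rewrite e1 g1 => H.
  have h8 : (0:R) < 8 by lra.
  by rewrite H ltxx in h8.

pose w (k : nat) : R := if k == 0%N then x0 x else if k == 2%N then xb x
  else if (k <= 3)%N then xa x else if (k < 4 + S)%N then xc x else xk x.
have hn : Gstar_n s q = N.+1 by rewrite /Gstar_n eqN; lia.
have hwc : forall k, (4 <= k < 4 + S)%N -> w k = xc x.
  move=> k hk; rewrite /w; case: ifP => [/eqP ?|_]; first (exfalso; lia).
  case: ifP => [/eqP ?|_]; first (exfalso; lia).
  case: ifP => [?|_]; first (exfalso; lia).
  by case: ifP => [//|?]; exfalso; lia.
have hwk : forall k, (4 + S <= k)%N -> w k = xk x.
  move=> k hk; rewrite /w; case: ifP => [/eqP ?|_]; first (exfalso; lia).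
  case: ifP => [/eqP ?|_]; first (exfalso; lia).
  case: ifP => [?|_]; first (exfalso; lia).
  by case: ifP => [?|//]; exfalso; lia.
have hsum : \sum_(v <- iota 1 N) w v = 2 * xa x + xb x + S%:R * xc x + (2 * q)%:R * xk x.
  rewrite eqN (iotaD 1 (3 + S) (2 * q)) (iotaD 1 3 S) !big_cat (_ : iota 1 3 = [:: 1; 2; 3]%N) // !big_cons big_nil /=.
  rewrite [X in _ + X + _ = _](eq_big_seq (fun _ => xc x)); last first.
    by move=> k; rewrite mem_iota => hk; apply: hwc; lia.
  rewrite [X in _ + X = _](eq_big_seq (fun _ => xk x)); last first.
    by move=> k; rewrite mem_iota => hk; apply: hwk; lia.
  rewrite !sum_constR !size_iota /w /=; ring.
exists x; split => //.
apply/eigenvalueP; exists (\row_(i < Gstar_n s q) w i).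
  apply/rowP => j; rewrite mulQ; last first.
    rewrite /Gstar_edges !all_cat; apply/and4P; split.
    - rewrite all_map; apply/allP => v; rewrite mem_iota /Gstar_n => hv /=.
      lia.
    - rewrite /Gstar_n /=; lia.
    - have := cyc_ok 4 hs; apply: sub_all => e /and5P [h1 h2 h3 h4 h5].
      apply/and3P; split => //; rewrite /Gstar_n; lia.
    - have := k2_ok (4 + S) q; apply: sub_all => e /and5P [h1 h2 h3 h4 h5].
      apply/and3P; split => //; rewrite /Gstar_n; lia.
  rewrite !mxE /Gstar_edges !big_cat.
  have -> : (Gstar_n s q).-1 = N by rewrite hn.
  rewrite (cyc_sum j hs hwc).
  have hk2 : forall k, (4 + S <= k < 4 + S + 2 * q)%N -> w k = xk x.
    by move=> k /andP [hk _]; apply: hwk.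
  rewrite (k2_sum j hk2) !big_cons big_nil /F /=.
  have w0 : w 0%N = x0 x by [].
  have hjN : (j < N.+1)%N by rewrite -hn ltn_ord.
  case: (posnP j) => [j0|jpos].
    rewrite j0 star_sum0 hsum /= w0.
    have -> : x * x0 x = x * x0 x - g x by rewrite gx subr0.
    by rewrite /g; ring.
  rewrite (star_sumj w (_ : (0 < j <= N)%N)); last by rewrite jpos -ltnS.
  case: (ltnP j 4) => hj4.
    have hj' : (j < 4 + S)%N by lia.
    rewrite (_ : (4 + S <= j)%N = false) /=; last by lia.
    have : (nat_of_ord j = 1 \/ nat_of_ord j = 2 \/ nat_of_ord j = 3)%N by lia.
    by case=> [->|[->|->]]; rewrite /w /= /x0 /xa /xb; ring.
  have e1 : (1 == j :> nat) = false by apply/eqP; lia.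
  have e2 : (2 == j :> nat) = false by apply/eqP; lia.
  have e3 : (3 == j :> nat) = false by apply/eqP; lia.
  rewrite e1 e2 e3 /= w0.
  case: (ltnP j (4 + S)) => hjS /=.
    rewrite (hwc j) /x0 /xc; last lia. clearbody w. ring.
  have hjq : (j < 4 + S + 2 * q)%N by lia.
  rewrite hjq (hwk j) // /x0 /xk; clearbody w; rewrite /=; ring.
have hpos : 0 < x0 x.
  have -> : x0 x = ((1 - x) * (4 - x)) * ((5 - x) * (3 - x)) by rewrite /x0; ring.
  by apply: mulr_gt0; apply: mulr_gt0; lra.
have hn0 : (0 < Gstar_n s q)%N by rewrite hn.
apply/negP => /eqP /rowP /(_ (Ordinal hn0)); rewrite !mxE /= => H.
by move: hpos; rewrite (_ : x0 x = w 0%N) // H ltxx.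
Qed.
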